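(* Work in homotopy type theory with univalence and function extensionality. Let $A, B$ be types and $f : A \to B$ a function such that $\mathsf{ishadj}\, f$ is inhabited. Then there is an equivalence \[ \mathsf{2adj}\, f \simeq \prod_{x : A} \big(\mathsf{refl}_{\mathsf{refl}_x} = \mathsf{refl}_{\mathsf{refl}_x}\big), \] where \[ \mathsf{2adj}\, f :\equiv \sum_{g : B \to A} \ \sum_{\eta : gf \sim \mathsf{id}_A} \ \sum_{\varepsilon : fg \sim \mathsf{id}_B} \ \sum_{\tau : f[\eta] \sim \varepsilon_f} \ \sum_{\theta : \eta_g \sim g[\varepsilon]} \ \big(\mathsf{Coh}\, \eta \cdot g \llbracket \tau \rrbracket \sim \theta_f\big) \times \big(\tau_g \cdot \mathsf{Coh}\, \varepsilon \sim f \llbracket \theta \rrbracket\big) \] and $\mathsf{ishadj}\, f :\equiv \sum_{g : B \to A} \sum_{\eta : gf \sim \mathsf{id}_A} \sum_{\varepsilon : fg \sim \mathsf{id}_B} \big(f[\eta] \sim \varepsilon_f\big)$.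
   Context: Notation: for $h : X \to Y$ and a path $p : x = y$, $h[p] : hx = hy$ denotes $\mathsf{ap}_h(p)$; for 2-paths $\alpha : p = q$, $h\llbracket \alpha \rrbracket : h[p] = h[q]$ denotes the action of $h$ on 2-paths. A homotopy $H : f \sim g$ is an element of $\prod_x f x = g x$. For $H : f \sim g$ with $f,g : X \to Y$: for $k : C \to X$, $H_k : fk \sim gk$ is $\lambda c.\, H_{k c}$; for $h : Y \to C$, $h[H] : hf \sim hg$ is $\lambda x.\, h[H_x]$; for $\alpha : H \sim H'$ (i.e. $\prod_x H_x = H'_x$), $h\llbracket \alpha \rrbracket$ is $\lambda x.\, h\llbracket \alpha_x \rrbracket$. Concatenation $H \cdot H'$ is pointwise path concatenation in diagrammatic order. For maps $u : X \to Y$, $v : Y \to X$ and $H : vu \sim \mathsf{id}_X$, the homotopy $\mathsf{Coh}\, H : H_{vu} \sim v[u[H]]$ is defined pointwise: $(\mathsf{Coh}\, H)_x : H_{v(u x)} = v[u[H_x]]$ is the concatenation of the path $H_{v(ux)} = (vu)[H_x]$ given by naturality of $H$ (applied to $H_x$, cancelling $H_x$) with the functoriality path $(vu)[H_x] = v[u[H_x]]$. In the claim, $\mathsf{Coh}\,\eta$ uses $(u,v,H) = (f,g,\eta)$ and $\mathsf{Coh}\,\varepsilon$ uses $(u,v,H) = (g,f,\varepsilon)$. *)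

(* Defs.v *)
(* Plain Rocq (no library): a minimal HoTT-style setup with a Type-valued
   identity type, so that higher paths are not truncated. *)

Set Implicit Arguments.

Inductive paths {A : Type} (a : A) : A -> Type :=
  idpath : paths a a.
Arguments idpath {A a}, {A} a.

Notation "x = y" := (paths x y) : type_scope.
Notation "x = y :> A" := (@paths A x y) : type_scope.

Definition concat {A : Type} {x y z : A} (p : x = y) (q : y = z) : x = z :=
  match q in paths _ z' return x = z' with idpath => p end.
Notation "p @ q" := (concat p q) (at level 20, left associativity).

Definition inverse {A : Type} {x y : A} (p : x = y) : y = x :=
  match p in paths _ y' return y' = x with idpath => idpath end.

(** [ap h p], written h[p] in the paper. *)
Definition ap {X Y : Type} (h : X -> Y) {x y : X} (p : x = y) : h x = h y :=
  match p in paths _ y' return h x = h y' with idpath => idpath end.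

(** Action on 2-paths, written h[[alpha]] in the paper. *)
Definition ap2 {X Y : Type} (h : X -> Y) {x y : X} {p q : x = y} (alpha : p = q)
  : ap h p = ap h q := ap (ap h) alpha.

Definition homotopy {X : Type} {P : X -> Type} (f g : forall x, P x) : Type :=
  forall x, f x = g x.
Notation "f ~ g" := (homotopy f g) (at level 70).

Definition concat_1p {A : Type} {x y : A} (p : x = y) : idpath @ p = p :=
  match p in paths _ y' return idpath @ p = p with idpath => idpath end.

Definition hnat_id {X : Type} (f : X -> X) (H : forall x, f x = x)
  {a b : X} (p : a = b) : ap f p @ H b = H a @ p :=
  match p in paths _ b' return ap f p @ H b' = H a @ p with
  | idpath => concat_1p (H a)
  end.

Definition cancelR {A : Type} {x y z : A} (p q : x = y) (r : y = z)
  : p @ r = q @ r -> p = q :=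
  match r in paths _ z' return p @ r = q @ r -> p = q with
  | idpath => fun e => e
  end.

Definition ap_compose {X Y Z : Type} (u : X -> Y) (v : Y -> Z) {x y : X} (p : x = y)
  : ap (fun t => v (u t)) p = ap v (ap u p) :=
  match p in paths _ y' return ap (fun t => v (u t)) p = ap v (ap u p) with
  | idpath => idpath
  end.

(** Pointwise: the path
    H_{v(ux)} = (vu)[H_x] obtained from naturality of H applied to H_x
    (cancelling H_x), followed by functoriality (vu)[H_x] = v[u[H_x]]. *)
Definition Coh {X Y : Type} (u : X -> Y) (v : Y -> X) (H : forall x, v (u x) = x)
  : forall x, H (v (u x)) = ap v (ap u (H x)) :=
  fun x =>
    inverse (cancelR (ap (fun t => v (u t)) (H x)) (H (v (u x))) (H x)
                     (hnat_id (fun t => v (u t)) H (H x)))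
    @ ap_compose u v (H x).

Definition ishadj {A B : Type} (f : A -> B) : Type :=
  { g : B -> A &
  { eta : forall a, g (f a) = a &
  { eps : forall b, f (g b) = b &
    forall a, ap f (eta a) = eps (f a) } } }.

Definition Equiv (X Y : Type) : Type := { e : X -> Y & ishadj e }.

Definition twoadj {A B : Type} (f : A -> B) : Type :=
  { g : B -> A &
  { eta : forall a, g (f a) = a &
  { eps : forall b, f (g b) = b &
  { tau : forall a, ap f (eta a) = eps (f a) &
  { theta : forall b, eta (g b) = ap g (eps b) &
      ((forall a, Coh f g eta a @ ap2 g (tau a) = theta (f a))
     * (forall b, tau (g b) @ Coh g f eps b = ap2 f (theta b)))%type } } } } }.

Definition happly {X : Type} {P : X -> Type} {h k : forall x, P x}
  : h = k -> forall x, h x = k x :=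
  fun e x => match e in paths _ k' return h x = k' x with idpath => idpath end.

Definition Funext : Type :=
  forall (X : Type) (P : X -> Type) (h k : forall x, P x), ishadj (@happly X P h k).

(* Main.v *)
Require Import Defs.

Definition transport {X} (P : X -> Type) {x y : X} (p : x = y) (u : P x) : P y :=
  match p with idpath => u end.

Definition concat_p1 {X}{x y : X}(p : x = y) : p @ idpath = p := idpath.
Definition concat_assoc {X}{x y z w : X}(p : x = y)(q : y = z)(r : z = w)
  : (p @ q) @ r = p @ (q @ r).
Proof. destruct r; reflexivity. Defined.
Definition concat_pV {X}{x y : X}(p : x = y) : p @ inverse p = idpath.
Proof. destruct p; reflexivity. Defined.
Definition concat_Vp {X}{x y : X}(p : x = y) : inverse p @ p = idpath.
Proof. destruct p; reflexivity. Defined.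
Definition inv_inv {X}{x y : X}(p : x = y) : inverse (inverse p) = p.
Proof. destruct p; reflexivity. Defined.
Definition ap_pp {X Y}(h : X -> Y){x y z : X}(p : x = y)(q : y = z)
  : ap h (p @ q) = ap h p @ ap h q.
Proof. destruct q; reflexivity. Defined.
Definition ap_V {X Y}(h : X -> Y){x y : X}(p : x = y)
  : ap h (inverse p) = inverse (ap h p).
Proof. destruct p; reflexivity. Defined.
Definition ap_idmap {X}{x y : X}(p : x = y) : ap (fun u => u) p = p.
Proof. destruct p; reflexivity. Defined.

Definition paths_ind_r {X}{b : X}(P : forall a, a = b -> Type)(H : P b idpath)
  (a : X) (p : a = b) : P a p :=
  transport (P a) (inv_inv p)
   (match inverse p as p' in paths _ a' return P a' (inverse p') with idpath => H end).

Definition whiskerR {X}{x y z : X}{p q : x = y}(al : p = q)(s : y = z)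
  : p @ s = q @ s := ap (fun u => u @ s) al.
Definition whiskerL {X}{x y z : X}(s : x = y){p q : y = z}(al : p = q)
  : s @ p = s @ q := ap (fun u => s @ u) al.

Definition whiskerR_inj {X}{x y z : X}{p q : x = y}(al be : p = q)(s : y = z)
  : whiskerR al s = whiskerR be s -> al = be.
Proof. destruct s. intro e. exact (inverse (ap_idmap al) @ e @ ap_idmap be). Defined.

Definition cancelR_spec {X}{x y z : X}(p q : x = y)(s : y = z)(e : p @ s = q @ s)
  : whiskerR (cancelR p q s e) s = e.
Proof. destruct s. exact (ap_idmap e). Defined.

Definition Coh0 {X} (r : X -> X) (H : forall x, r x = x) (x : X)
  : H (r x) = ap r (H x) :=
  inverse (cancelR (ap r (H x)) (H (r x)) (H x) (hnat_id r H (H x))).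

Definition Coh0_spec {X} (r : X -> X) (H : forall x, r x = x) (x : X)
  : whiskerR (Coh0 r H x) (H x) = inverse (hnat_id r H (H x)).
Proof.
  unfold Coh0, whiskerR. refine (ap_V (fun u => u @ H x) _ @ _). apply (ap inverse).
  apply cancelR_spec.
Defined.



Definition G_E {T}{p0 p1 p2 p3 p4 p5 : T}
 (M : p2 = p0) (wt : p0 = p5) (wta : p2 = p4) (h : p4 = p5) (wQ : p2 = p3)
 (wC : p5 = p3) (wCe : p0 = p1) (wD : p1 = p2)
 (nat : M @ wt = wta @ h) (Q : wta @ (h @ wC) = wQ)
 (spec : inverse M @ inverse wD = wCe) :
 wCe @ (wD @ wQ) = wt @ wC.
Proof.
  destruct spec, Q. destruct M. destruct wD. destruct wta. destruct wt.
  pose (e := nat @ concat_1p h). clearbody e. clear nat. destruct e.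
  destruct wC. reflexivity.
Defined.

Definition G_spec {T}{N0 N1 q0 q1 q2 : T}
  (W : q0 = q1) (a1 : N0 = q0) (a2 : N1 = q1) (hn : N1 = N0) (wD : q1 = q2)
  (hyp : inverse hn = a1 @ (W @ inverse a2)) :
  W = inverse (inverse wD @ (inverse a2 @ (hn @ a1))) @ inverse wD.
Proof.
  destruct a1, a2, wD, hn. simpl in *.
  exact (inverse (hyp @ concat_1p W)).
Defined.

Definition ap_whiskerR {X Y}(h : X -> Y){x y z : X}{p q : x = y}(al : p = q)(s : y = z)
  : ap (ap h) (whiskerR al s)
    = ap_pp h p s @ (whiskerR (ap (ap h) al) (ap h s) @ inverse (ap_pp h q s)).
Proof. destruct al, s, p. reflexivity. Defined.

Definition Mrefl {X Y}(h : X -> Y){z x : X}(q : z = x)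
  : inverse (ap_pp h idpath q) @ ap (ap h) (concat_1p q) = concat_1p (ap h q).
Proof. destruct q. reflexivity. Defined.

Definition G_nat1 {X}{y z : X}{u v : y = z}(t : u = v)(Y : idpath @ u = u)
  (e : concat_1p u = Y) :
  (idpath @ Y) @ ap (fun w => w) t = whiskerL idpath t @ concat_1p v.
Proof. destruct e, t. destruct u. reflexivity. Defined.

Section ESec.
Context {A B : Type} (f : A -> B) (g : B -> A) (eta : forall a, g (f a) = a)
  (eps : forall b, f (g b) = b) (tau : forall a, ap f (eta a) = eps (f a)).

Definition Dp {x y : A} (p : x = y)
  : ap f (ap (fun t => g (f t)) p) = ap (fun t => f (g t)) (ap f p) :=
  ap (ap f) (ap_compose f g p) @ inverse (ap_compose g f (ap f p)).

Definition Mp {x y : A} (p : x = y)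
  : ap (fun t => f (g t)) (ap f p) @ ap f (eta y) = ap f (eta x) @ ap f p :=
  whiskerR (inverse (Dp p)) (ap f (eta y)) @
   (inverse (ap_pp f (ap (fun t => g (f t)) p) (eta y)) @
    (ap (ap f) (hnat_id (fun t => g (f t)) eta p) @ ap_pp f (eta x) p)).

Definition nat_tau {x y : A} (p : x = y)
  : Mp p @ whiskerR (tau x) (ap f p)
    = whiskerL (ap (fun t => f (g t)) (ap f p)) (tau y)
      @ hnat_id (fun t => f (g t)) eps (ap f p).
Proof.
  destruct p. simpl.
  exact (G_nat1 (tau x) _ (inverse (Mrefl f (eta x)))).
Defined.

Definition Qlem (z : B) (q : f (g z) = z) (t : q = eps z)
  : whiskerR (ap (ap (fun t => f (g t))) t) q
    = whiskerL (ap (fun t => f (g t)) q) t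
      @ (hnat_id (fun t => f (g t)) eps q @ whiskerR (Coh0 (fun t => f (g t)) eps z) q).
Proof.
  revert q t. refine (paths_ind_r _ _). simpl.
  refine (inverse (concat_1p _ @ (whiskerL _ (Coh0_spec _ _ _) @ concat_pV _))).
Defined.

End ESec.


Section ESec2.
Context {A B : Type} (f : A -> B) (g : B -> A) (eta : forall a, g (f a) = a)
  (eps : forall b, f (g b) = b) (tau : forall a, ap f (eta a) = eps (f a)).

Definition Eprime (a : A)
  : ap (ap f) (Coh0 (fun t => g (f t)) eta a)
     @ (Dp f g (eta a) @ ap (ap (fun t => f (g t))) (tau a))
    = tau (g (f a)) @ Coh0 (fun t => f (g t)) eps (f a).
Proof.
  apply (whiskerR_inj _ _ (ap f (eta a))).
  unfold whiskerR at 1 2.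
  set (W := fun u : f (g (f (g (f a)))) = f (g (f a)) => u @ ap f (eta a)).
  refine (ap_pp W _ _ @ (whiskerL _ (ap_pp W _ _) @ _ @ inverse (ap_pp W _ _))).
  refine (G_E (Mp f g eta (eta a)) _ _ _ _ _ _ _ (nat_tau f g eta eps tau (eta a))
           (inverse (Qlem f g eps (f a) (ap f (eta a)) (tau a))) _).
  refine (_ @ inverse (G_spec _ (ap_pp f _ _) (ap_pp f _ _)
             (ap (ap f) (hnat_id (fun t => g (f t)) eta (eta a))) _ _)).
  - apply whiskerR. apply ap. unfold Mp. apply whiskerR.
    exact (ap_V W (Dp f g (eta a))).
  - refine (inverse (ap_V (ap f) _) @ _).
    refine (ap (ap (ap f)) (inverse (Coh0_spec _ eta a)) @ _).
    apply ap_whiskerR.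
Defined.
End ESec2.


Definition G_E2 {T}{q0 q1 q2 q3 q4 q5 q6 : T}
  (X1 : q0 = q1) (Y1 : q1 = q2) (Z1 : q3 = q2) (Tt : q3 = q4) (ta : q0 = q5)
  (C0 : q5 = q4) (Z2 : q4 = q6) (V : q2 = q6)
  (E' : X1 @ ((Y1 @ inverse Z1) @ Tt) = ta @ C0)
  (nat : Tt @ Z2 = Z1 @ V) :
  (X1 @ Y1) @ V = ta @ (C0 @ Z2).
Proof.
  destruct Z1, Tt, Z2.
  pose (e := nat @ concat_1p V). clearbody e. clear nat. destruct e.
  exact E'.
Defined.

Definition apc_nat {X Y Z}(u : X -> Y)(v : Y -> Z){x y : X}{p q : x = y}(t : p = q)
  : ap (ap (fun s => v (u s))) t @ ap_compose u v q
    = ap_compose u v p @ ap (ap v) (ap (ap u) t).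
Proof. destruct t. exact (concat_1p (ap_compose u v p)). Defined.

Definition Elem {A B : Type} (f : A -> B) (g : B -> A) (eta : forall a, g (f a) = a)
  (eps : forall b, f (g b) = b) (tau : forall a, ap f (eta a) = eps (f a)) (a : A)
  : ap2 f (Coh f g eta a @ ap2 g (tau a)) = tau (g (f a)) @ Coh g f eps (f a).
Proof.
  unfold ap2.
  refine (ap_pp (ap f) _ _ @ _).
  refine (whiskerR (ap_pp (ap f) _ _) _ @ _).
  exact (G_E2 _ _ _ _ _ _ _ _ (Eprime f g eta eps tau a) (apc_nat g f (tau a))).
Defined.


Record QEquiv (X Y : Type) := QE {
  qf : X -> Y; qg : Y -> X;
  qs : forall x, qg (qf x) = x; qr : forall y, qf (qg y) = y }.
Arguments QE {X Y}.
Arguments qf {X Y}. Arguments qg {X Y}. Arguments qs {X Y}. Arguments qr {X Y}.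

Definition qe_id (X : Type) : QEquiv X X := QE (fun x => x) (fun x => x) (fun _ => idpath) (fun _ => idpath).

Definition qe_comp {X Y Z} (e1 : QEquiv X Y) (e2 : QEquiv Y Z) : QEquiv X Z.
Proof.
  refine (QE (fun x => qf e2 (qf e1 x)) (fun z => qg e1 (qg e2 z)) _ _).
  - intro x. exact (ap (qg e1) (qs e2 (qf e1 x)) @ qs e1 x).
  - intro z. exact (ap (qf e2) (qr e1 (qg e2 z)) @ qr e2 z).
Defined.

Definition G_adj {T}{x y0 y1 : T} (m : y0 = y1) (R1 : x = y0) (L : x = y0) (Ap : x = y0)
  (R2 : y0 = y1) (K : L = Ap) (N : Ap @ R2 = R1 @ m)
  : m = inverse R1 @ (L @ R2).
Proof.
  destruct K. destruct R1. simpl in *.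
  exact (inverse (concat_1p m) @ inverse N @ inverse (concat_1p (L @ R2))).
Defined.

Definition ap_comp3 {X Y}(h : X -> Y)(g : Y -> X){x y : X}(p : x = y)
  : ap h (ap (fun t => g (h t)) p) = ap (fun t => h (g t)) (ap h p).
Proof. destruct p. reflexivity. Defined.

Definition adjointify {X Y} (e : QEquiv X Y) : ishadj (qf e).
Proof.
  set (h := qf e). set (g := qg e). set (s := qs e). set (rr := qr e).
  exists g, s.
  exists (fun y => inverse (rr (h (g y))) @ (ap h (s (g y)) @ rr y)).
  intro a.
  refine (G_adj (ap h (s a)) (rr (h (g (h a)))) (ap h (s (g (h a))))
            (ap (fun t => h (g t)) (ap h (s a))) (rr (h a)) _
            (hnat_id (fun t => h (g t)) rr (ap h (s a)))).
  exact (ap (ap h) (Coh0 (fun t => g (h t)) s a) @ ap_comp3 h g (s a)).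
Defined.

Definition qe_to_equiv {X Y} (e : QEquiv X Y) : Equiv X Y := existT _ (qf e) (adjointify e).

Definition Contr (X : Type) := { c : X & forall x, c = x }.

Definition contr_retract {X Y} (s : X -> Y) (r : Y -> X) (rs : forall x, r (s x) = x)
  (c : Contr Y) : Contr X.
Proof.
  exists (r (projT1 c)). intro x. exact (ap r (projT2 c (s x)) @ rs x).
Defined.

Definition contr_paths {X} (c : Contr X) (x y : X) : Contr (x = y).
Proof.
  exists (inverse (projT2 c x) @ projT2 c y).
  intro p. destruct p. apply concat_Vp.
Defined.

Definition path_fib {X Y}(h : X -> Y){y : Y}{x1 x2 : X}(q : x1 = x2)
  (p1 : h x1 = y) (p2 : h x2 = y) (e : p1 = ap h q @ p2)
  : existT (fun x => h x = y) x1 p1 = existT _ x2 p2.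
Proof.
  destruct q. destruct (e @ concat_1p p2). reflexivity.
Defined.

Definition hae_contr_fib {X Y}(h : X -> Y)(w : ishadj h)(y : Y)
  : Contr { x : X & h x = y }.
Proof.
  destruct w as [g [eta [eps tau]]].
  exists (existT _ (g y) (eps y)).
  intros [x p]. destruct p.
  exact (path_fib h (eta x) (eps (h x)) idpath (inverse (tau x))).
Defined.

Definition hae_contr_fib' {X Y}(h : X -> Y)(w : ishadj h)(y : Y)
  : Contr { x : X & y = h x }.
Proof.
  refine (contr_retract (fun u => existT _ (projT1 u) (inverse (projT2 u)))
            (fun u => existT _ (projT1 u) (inverse (projT2 u))) _ (hae_contr_fib h w y)).
  intros [x p]. simpl. exact (ap (existT _ x) (inv_inv p)).
Defined.

Definition transport_sig {X}(P : X -> Type){x y : X}(e : x = y)(u : P x)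
  : existT P y (transport P e u) = existT P x u.
Proof. destruct e. reflexivity. Defined.

Definition sig_contr_base {X}(P : X -> Type)(c : Contr X)(x0 : X)
  : QEquiv { x : X & P x } (P x0).
Proof.
  set (k := fun x => inverse (projT2 c x) @ projT2 c x0 : x = x0).
  refine (QE (fun u => transport P (k (projT1 u)) (projT2 u))
             (fun p => existT P x0 p) _ _).
  - intros [x u]. simpl. apply transport_sig.
  - intro p. simpl. exact (ap (fun e => transport P e p) (concat_Vp (projT2 c x0))).
Defined.

Definition sig_contr_contr {X}(P : X -> Type)(c : Contr X)(cP : forall x, Contr (P x))
  : Contr { x : X & P x }.
Proof.
  set (e := sig_contr_base P c (projT1 c)).
  exact (contr_retract (qf e) (qg e) (qs e) (cP (projT1 c))).
Defined.

Section FE.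
Context (funext : Funext).
Definition funext_map {X}{P : X -> Type}{h k : forall x, P x} (H : forall x, h x = k x) : h = k :=
  projT1 (funext X P h k) H.

Definition pi_contr {X}(P : X -> Type)(c : forall x, Contr (P x)) : Contr (forall x, P x).
Proof.
  exists (fun x => projT1 (c x)). intro s. apply funext_map. intro x. apply (projT2 (c x)).
Defined.

Definition pi_qe {X}(P Q : X -> Type)(e : forall x, QEquiv (P x) (Q x))
  : QEquiv (forall x, P x) (forall x, Q x).
Proof.
  refine (QE (fun s x => qf (e x) (s x)) (fun s x => qg (e x) (s x)) _ _).
  - intro s. apply funext_map. intro x. apply qs.
  - intro s. apply funext_map. intro x. apply qr.
Defined.
End FE.

Definition G_apr {T}{P0 P1 P2 P3 : T} (u1 : P0 = P1) (q : P1 = P2) (Aq : P0 = P3) (u2 : P3 = P2)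
  (N : Aq @ u2 = u1 @ q) : inverse u1 @ (Aq @ u2) = q.
Proof. destruct u1. simpl in *. exact (concat_1p _ @ N @ concat_1p q). Defined.

Definition hae_ap_qe {X Y}(h : X -> Y)(w : ishadj h)(x y : X)
  : QEquiv (x = y) (h x = h y).
Proof.
  refine (QE (ap h) (fun q => inverse (projT1 (projT2 w) x) @ (ap (projT1 w) q @ projT1 (projT2 w) y)) _ _);
  destruct w as [g [eta [eps tau]]]; simpl.
  - intro p. destruct p. exact (whiskerL _ (concat_1p _) @ concat_Vp _).
  - intro q.
    refine (ap_pp h _ _ @ _).
    refine (whiskerL _ (ap_pp h _ _) @ _).
    refine (whiskerR (ap_V h _) _ @ _).
    refine (whiskerR (ap (fun u => inverse u) (tau x)) _ @ _).
    refine (whiskerL _ (whiskerR (inverse (ap_compose g h q)) _) @ _).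
    refine (whiskerL _ (whiskerL _ (tau y)) @ _).
    apply G_apr. exact (hnat_id (fun t => h (g t)) eps q).
Defined.

Definition hae_ap {X Y}(h : X -> Y)(w : ishadj h)(x y : X) : ishadj (@ap X Y h x y) :=
  adjointify (hae_ap_qe h w x y).

Definition qe_loop {X}{x y : X}(p : x = y) : QEquiv (p = p) (idpath x = idpath x).
Proof. destruct p. apply qe_id. Defined.
Definition qe_base {X}{x y : X}(p : x = y)
  : QEquiv (idpath (idpath x) = idpath (idpath x)) (idpath (idpath y) = idpath (idpath y)).
Proof. destruct p. apply qe_id. Defined.

Definition qe_postcat {X}{x y z : X}(e : y = z) : QEquiv (x = y) (x = z).
Proof.
  refine (QE (fun q => q @ e) (fun q => q @ inverse e) _ _).
  - intro q. destruct e. reflexivity.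
  - intro q. destruct e. reflexivity.
Defined.

Definition qe_loop2 {X}{x y : X}(p : x = y)
  : QEquiv (idpath p = idpath p) (idpath (idpath x) = idpath (idpath x)).
Proof. destruct p. apply qe_id. Defined.


Definition Cp {A B : Type} (f : A -> B) (g : B -> A) (eta : forall a, g (f a) = a)
  (eps : forall b, f (g b) = b) (tau : forall a, ap f (eta a) = eps (f a)) : Type :=
  { theta : forall b, eta (g b) = ap g (eps b) &
      ((forall a, Coh f g eta a @ ap2 g (tau a) = theta (f a))
     * (forall b, tau (g b) @ Coh g f eps b = ap2 f (theta b)))%type }.

Definition Cw {A B : Type} (f : A -> B) (w : ishadj f) : Type :=
  match w with existT _ g (existT _ eta (existT _ eps tau)) => Cp f g eta eps tau end.

Definition step1 {A B : Type} (f : A -> B) : QEquiv (twoadj f) { w : ishadj f & Cw f w }.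
Proof.
  refine (QE (fun t => match t with existT _ g (existT _ eta (existT _ eps (existT _ tau rest))) =>
             existT (Cw f) (existT _ g (existT _ eta (existT _ eps tau))) rest end)
             (fun u => match u with existT _ (existT _ g (existT _ eta (existT _ eps tau))) rest =>
             existT _ g (existT _ eta (existT _ eps (existT _ tau rest))) end) _ _).
  - intros [g [eta [eps [tau rest]]]]. reflexivity.
  - intros [[g [eta [eps tau]]] rest]. reflexivity.
Defined.

Section Main.
Context (funext : Funext) {A B : Type} (f : A -> B) (hf : ishadj f).

Definition Yt := { s : forall b, { a : A & f a = b } &
   { eta : forall a, projT1 (s (f a)) = a & forall a, ap f (eta a) = projT2 (s (f a)) } }.

Definition contr_ishadj : Contr (ishadj f).
Proof.
  refine (contr_retract (Y := Yt)
    (fun (w : ishadj f) => match w with existT _ g (existT _ eta (existT _ eps tau)) =>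
       existT _ (fun b => existT (fun a => f a = b) (g b) (eps b)) (existT _ eta tau) end)
    (fun (y : Yt) => match y with existT _ s (existT _ eta tau) =>
       existT _ (fun b => projT1 (s b)) (existT _ eta (existT _ (fun b => projT2 (s b)) tau)) end)
    _ _).
  - intros [g [eta [eps tau]]]. reflexivity.
  - apply sig_contr_contr.
    + apply (pi_contr funext). intro b. apply (hae_contr_fib f hf).
    + intro s.
      refine (contr_retract
        (fun (u : { eta : forall a, projT1 (s (f a)) = a & forall a, ap f (eta a) = projT2 (s (f a)) }) => fun a => existT (fun q => ap f q = projT2 (s (f a))) (projT1 u a) (projT2 u a))
        (fun h => existT _ (fun a => projT1 (h a)) (fun a => projT2 (h a))) _ _).
      * intros [eta tau]. reflexivity.
      * apply (pi_contr funext). intro a.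
        apply (hae_contr_fib (ap f) (hae_ap f hf _ _)).
Defined.


Definition step4 (g : B -> A) (eta : forall a, g (f a) = a)
  (eps : forall b, f (g b) = b) (tau : forall a, ap f (eta a) = eps (f a))
  : QEquiv (Cp f g eta eps tau)
      (forall x : A, (idpath (idpath x)) = (idpath (idpath x))).
Proof.
  set (w := existT _ g (existT _ eta (existT _ eps tau)) : ishadj f).
  set (L := fun b => tau (g b) @ Coh g f eps b).
  set (K := fun a => Coh f g eta a @ ap2 g (tau a)).
  set (BaseT := { theta : forall b, eta (g b) = ap g (eps b) &
                   forall b, L b = ap2 f (theta b) }).
  assert (e1 : QEquiv (Cp f g eta eps tau)
                 { tc : BaseT & forall a, K a = projT1 tc (f a) }).
  { refine (QE (fun (u : Cp f g eta eps tau) => match u with existT _ th (c1, c2) =>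
                  existT (fun tc : BaseT => forall a, K a = projT1 tc (f a))
                    (existT _ th c2) c1 end)
               (fun (v : { tc : BaseT & forall a, K a = projT1 tc (f a) }) => match v with existT _ (existT _ th c2) c1 =>
                  existT _ th (c1, c2) end) _ _).
    - intros [th [c1 c2]]. reflexivity.
    - intros [[th c2] c1]. reflexivity. }
  assert (cB : Contr BaseT).
  { refine (contr_retract
      (fun (u : BaseT) => fun b =>
         existT (fun t => L b = ap (ap f) t) (projT1 u b) (projT2 u b))
      (fun h => existT _ (fun b => projT1 (h b)) (fun b => projT2 (h b))) _ _).
    - intros [th c2]. reflexivity.
    - apply (pi_contr funext). intro b.
      apply (hae_contr_fib' (ap (ap f)) (hae_ap (ap f) (hae_ap f w _ _) _ _)). }
  set (x0 := projT1 cB).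
  refine (qe_comp e1 (qe_comp (sig_contr_base _ cB x0) _)).
  apply (pi_qe funext). intro a.
  set (hA := hae_ap (ap f) (hae_ap f w _ _) (eta (g (f a))) (ap g (eps (f a)))).
  set (G := projT1 hA). set (et := projT1 (projT2 hA)).
  set (e0 := inverse (et (K a)) @ (ap G (Elem f g eta eps tau a @ projT2 x0 (f a)))
               @ et (projT1 x0 (f a)) : K a = projT1 x0 (f a)).
  refine (qe_comp (qe_postcat (inverse e0)) _).
  refine (qe_comp (qe_loop (K a)) _).
  refine (qe_comp (qe_loop2 (eta (g (f a)))) _).
  exact (qe_base (eta (g (f a)) @ eta a)).
Defined.

Definition main_qe : QEquiv (twoadj f) (forall x : A, (idpath (idpath x)) = (idpath (idpath x))).
Proof.
  refine (qe_comp (step1 f) (qe_comp (sig_contr_base _ contr_ishadj hf) _)).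
  destruct hf as [g [eta [eps tau]]]. exact (step4 g eta eps tau).
Defined.

End Main.

Theorem theorem3p13 (funext : Funext) (A B : Type) (f : A -> B)
  (hf : ishadj f) :
  Equiv (twoadj f) (forall x : A, (idpath (idpath x)) = (idpath (idpath x))).
Proof. exact (qe_to_equiv (main_qe funext f hf)). Qed.
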